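(* Let $B\in\mathbb{R}^{n\times n}$ be symmetric, $b\in\mathbb{R}^n$, $d\in\mathbb{R}$, $h(x)=x^TBx+2b^Tx+d$, and let $\alpha\le\beta$ be real numbers. Then there exists $\overline{x}\in\mathbb{R}^n$ with $\alpha<h(\overline{x})<\beta$ if and only if there exist $\widehat{x}\in\mathbb{R}^n$ and a symmetric matrix $\widehat{X}\in\mathbb{R}^{n\times n}$ with $\widehat{X}-\widehat{x}\widehat{x}^T$ positive definite such that $\alpha< B\bullet\widehat{X}+2b^T\widehat{x}+d<\beta$.
   Context: For matrices $M,N\in\mathbb{R}^{n\times n}$, $M\bullet N=\sum_{i,j}m_{ij}n_{ij}$. *)

(* Defs.v *)
From HB Require Import structures.
From mathcomp Require Import all_boot all_order all_algebra.
From mathcomp Require Import reals.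
Set Implicit Arguments. Unset Strict Implicit. Unset Printing Implicit Defensive.
Import Order.TTheory GRing.Theory Num.Theory.
Local Open Scope ring_scope.

Definition frob (R : ringType) (n : nat) (M N : 'M[R]_n) : R :=
  \sum_(i < n) \sum_(j < n) M i j * N i j.

Definition symmx (R : ringType) (n : nat) (M : 'M[R]_n) : Prop := M^T = M.

Definition posdefmx (R : numDomainType) (n : nat) (M : 'M[R]_n) : Prop :=
  forall v : 'cV[R]_n, v != 0 -> 0 < (v^T *m M *m v) 0 0.

Definition quadf (R : ringType) (n : nat) (B : 'M[R]_n) (b : 'cV[R]_n) (d : R)
  (x : 'cV[R]_n) : R :=
  (x^T *m B *m x) 0 0 + 2 * (b^T *m x) 0 0 + d.

(* Main.v *)
Require Import Defs.
From HB Require Import structures.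
From mathcomp Require Import all_boot all_order all_algebra.
From mathcomp Require Import reals.
From mathcomp Require Import ring lra.
From Stdlib Require Import Classical.
Import Order.TTheory GRing.Theory Num.Theory.
Local Open Scope ring_scope.
Set Implicit Arguments. Unset Strict Implicit.

Section S.
Variable R : realType.

Definition bl n (Q : 'M[R]_n) (u v : 'cV[R]_n) := (u^T *m Q *m v) 0 0.

Lemma frob_rank1 n (B : 'M[R]_n) (u v : 'cV[R]_n) :
  frob B (u *m v^T) = bl B u v.
Proof.
rewrite /frob /bl mxE.
under [RHS]eq_bigr do rewrite mxE big_distrl.
rewrite exchange_big /=; apply: eq_bigr => i _; apply: eq_bigr => j _.
rewrite !mxE big_ord1 !mxE; ring.
Qed.

Lemma frobD n (B M N : 'M[R]_n) : frob B (M + N) = frob B M + frob B N.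
Proof.
rewrite /frob -big_split; apply: eq_bigr => i _; rewrite -big_split.
by apply: eq_bigr => j _; rewrite mxE mulrDr.
Qed.

Lemma frobZ n (B M : 'M[R]_n) a : frob B (a *: M) = a * frob B M.
Proof.
rewrite /frob mulr_sumr; apply: eq_bigr => i _; rewrite mulr_sumr.
by apply: eq_bigr => j _; rewrite mxE; ring.
Qed.

Lemma frobN n (B M : 'M[R]_n) : frob B (- M) = - frob B M.
Proof. by rewrite -scaleN1r frobZ mulN1r. Qed.

Lemma frob_scalar n (B : 'M[R]_n) a : frob B a%:M = a * \tr B.
Proof.
rewrite /frob /mxtrace mulr_sumr; apply: eq_bigr => i _.
rewrite (bigD1 i) //= big1 ?addr0; first by rewrite !mxE eqxx mulr1n mulrC.
by move=> j /negPf ji; rewrite !mxE eq_sym ji mulr0n mulr0.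
Qed.

Lemma frob0 n (B : 'M[R]_n) : frob B 0 = 0.
Proof. by rewrite /frob big1 // => i _; rewrite big1 // => j _; rewrite mxE mulr0. Qed.

Lemma bl_sym n (Q : 'M[R]_n) u v : Q^T = Q -> bl Q u v = bl Q v u.
Proof.
move=> HQ; rewrite /bl.
have -> : (u^T *m Q *m v) 0 0 = ((u^T *m Q *m v)^T) 0 0 by rewrite [RHS]mxE.
by rewrite !trmx_mul trmxK HQ mulmxA.
Qed.

Lemma blDl n (Q : 'M[R]_n) u w v : bl Q (u + w) v = bl Q u v + bl Q w v.
Proof. by rewrite /bl linearD /= !mulmxDl !mxE. Qed.
Lemma blDr n (Q : 'M[R]_n) u w v : bl Q v (u + w) = bl Q v u + bl Q v w.
Proof. by rewrite /bl !mulmxDr !mxE. Qed.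
Lemma blZl n (Q : 'M[R]_n) a u v : bl Q (a *: u) v = a * bl Q u v.
Proof. by rewrite /bl linearZ /= -!scalemxAl mxE. Qed.
Lemma blZr n (Q : 'M[R]_n) a u v : bl Q v (a *: u) = a * bl Q v u.
Proof. by rewrite /bl -!scalemxAr mxE. Qed.
Lemma blDlr n (Q1 Q2 : 'M[R]_n) u v : bl (Q1 + Q2) u v = bl Q1 u v + bl Q2 u v.
Proof. by rewrite /bl mulmxDr mulmxDl !mxE. Qed.
Lemma blZm n (Q : 'M[R]_n) a u v : bl (a *: Q) u v = a * bl Q u v.
Proof. by rewrite /bl -scalemxAr -scalemxAl mxE. Qed.
Lemma blNm n (Q : 'M[R]_n) u v : bl (- Q) u v = - bl Q u v.
Proof. by rewrite -scaleN1r blZm mulN1r. Qed.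


Lemma bl_exp n (Q : 'M[R]_n) u e t :
  bl Q (u + t *: e) (u + t *: e) = bl Q u u + t * bl Q u e + t * bl Q e u + t^+2 * bl Q e e.
Proof. rewrite blDl !blDr !blZl !blZr; ring. Qed.

Lemma bl_delta n (Q : 'M[R]_n) i j : bl Q (delta_mx i 0) (delta_mx j 0) = Q i j.
Proof. by rewrite /bl trmx_delta -rowE -colE !mxE. Qed.

Lemma bl_rank1 n (w u v : 'cV[R]_n) :
  bl (w *m w^T) u v = (u^T *m w) 0 0 * (w^T *m v) 0 0.
Proof. by rewrite /bl !mulmxA -[_ *m w^T *m v]mulmxA mxE big_ord1. Qed.

Definition psd n (Q : 'M[R]_n) := forall v, 0 <= bl Q v v.

Lemma symE n (Q : 'M[R]_n) i j : Q^T = Q -> Q i j = Q j i.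
Proof. by move=> HQ; rewrite -[in LHS]HQ mxE. Qed.

Lemma psd_zero_col n (Q : 'M[R]_n) (k : 'I_n) :
  Q^T = Q -> psd Q -> Q k k = 0 -> forall i, Q i k = 0.
Proof.
move=> HQ Hp Hk i.
have H t : 0 <= Q i i + t * Q i k + t * Q i k.
  have := Hp (delta_mx i 0 + t *: delta_mx k 0).
  by rewrite bl_exp [bl Q (delta_mx k 0) _](bl_sym _ _ HQ) !bl_delta Hk mulr0 addr0.
apply/eqP; apply: contraT => Hm.
have := H (- (Q i i + 1) / (2 * Q i k)).
set m := Q i k; set p := Q i i.
have -> : p + - (p + 1) / (2 * m) * m + - (p + 1) / (2 * m) * m = -1.
  by field; rewrite ?mulf_neq0 ?pnatr_eq0.
by rewrite ler0N1.
Qed.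

Lemma step n (B Q : 'M[R]_n) (k : 'I_n) : (forall y, bl B y y <= 0) ->
  Q^T = Q -> psd Q -> (forall i (j : 'I_n), (j < k)%N -> Q i j = 0) ->
  exists Q' : 'M[R]_n, [/\ Q'^T = Q', psd Q',
    (forall i (j : 'I_n), (j <= k)%N -> Q' i j = 0) & frob B Q <= frob B Q'].
Proof.
move=> HB HQ Hp Hz.
have jle (j : 'I_n) : (j <= k)%N -> (j < k)%N \/ j = k.
  rewrite leq_eqVlt => /orP [/eqP/val_inj -> |]; by [right | left].
have [Hk|Hk] := eqVneq (Q k k) 0.
  exists Q; split => // i j /jle [/Hz //| ->]; exact: psd_zero_col.
set e : 'cV[R]_n := delta_mx k 0.
set c := Q k k.
have c0 : 0 < c by rewrite lt_def Hk /c -bl_delta Hp.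
set w := col k Q.
have we : w = Q *m e by rewrite /w colE.
have wi i : w i 0 = Q i k by rewrite mxE.
exists (Q - c^-1 *: (w *m w^T)); split.
- by rewrite linearD /= linearN /= linearZ /= trmx_mul trmxK HQ.
- move=> v; rewrite blDlr blNm blZm bl_rank1.
  have E1 : (v^T *m w) 0 0 = bl Q v e by rewrite we /bl mulmxA.
  have E2 : (w^T *m v) 0 0 = bl Q v e.
    by rewrite we trmx_mul HQ; exact: (bl_sym _ _ HQ).
  rewrite E1 E2.
  have := Hp (v + (- bl Q v e / c) *: e).
  rewrite bl_exp (bl_sym _ e HQ) /e bl_delta -/e -/c.
  move=> H; apply: (le_trans H); rewrite le_eqVlt; apply/orP; left; apply/eqP.
  field; exact: lt0r_neq0.
- move=> i j /jle [jk| ->]; rewrite !mxE big_ord1 !mxE.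
    by rewrite (Hz i j jk) (symE j k HQ) (Hz k j jk) !mulr0 subr0.
  rewrite -/c; field; exact: lt0r_neq0.
- rewrite frobD frobN frobZ frob_rank1 lerDl oppr_ge0.
  by apply: mulr_ge0_le0; [rewrite invr_ge0 ltW | exact: HB].
Qed.

Lemma claim n (B P : 'M[R]_n) : (forall y, bl B y y <= 0) ->
  P^T = P -> psd P -> frob B P <= 0.
Proof.
move=> HB HP Hp.
have: forall k, (k <= n)%N -> exists Q : 'M[R]_n, [/\ Q^T = Q, psd Q,
    (forall i (j : 'I_n), (j < k)%N -> Q i j = 0) & frob B P <= frob B Q].
  elim=> [_|k IH Hk]; first by exists P; split.
  have [Q [HQ HQp HQz HQf]] := IH (ltnW Hk).
  have [Q' [H1 H2 H3 H4]] := step (k:=Ordinal Hk) HB HQ HQp HQz.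
  exists Q'; split => //; last exact: le_trans H4.
move=> /(_ n (leqnn n)) [Q [_ _ Hz Hf]].
apply: (le_trans Hf); rewrite /frob big1 // => i _; rewrite big1 // => j _.
by rewrite Hz ?mulr0.
Qed.


Lemma frobNl n (B M : 'M[R]_n) : frob (- B) M = - frob B M.
Proof.
rewrite /frob -sumrN; apply: eq_bigr => i _; rewrite -sumrN.
by apply: eq_bigr => j _; rewrite mxE mulNr.
Qed.

Lemma blNl n (B : 'M[R]_n) u v : bl (- B) u v = - bl B u v.
Proof. exact: blNm. Qed.

Lemma exists_dir n (B P : 'M[R]_n) : P^T = P -> psd P -> frob B P != 0 ->
  exists y, 0 < bl B y y * frob B P.
Proof.
move=> HP Hp s0; apply: NNPP => Hn.
have Hy y : bl B y y * frob B P <= 0.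
  by rewrite leNgt; apply/negP => H; apply: Hn; exists y.
have [sneg|spos|s00] := ltgtP (frob B P) 0.
- have : frob (- B) P <= 0.
    by apply: claim => // y; rewrite blNl oppr_le0; move: (Hy y); nra.
  by rewrite frobNl oppr_le0 leNgt sneg.
- have : frob B P <= 0.
    by apply: claim => // y; move: (Hy y); nra.
  by rewrite leNgt spos.
- by rewrite s00 eqxx in s0.
Qed.

End S.

Unset Implicit Arguments.

Theorem lemma1 (R : realType) (n : nat) (B : 'M[R]_n) (b : 'cV[R]_n) (d alpha beta : R) :
  symmx B -> alpha <= beta ->
  (exists xbar : 'cV[R]_n, alpha < quadf B b d xbar < beta) <->
  (exists (xhat : 'cV[R]_n) (Xhat : 'M[R]_n),
      symmx Xhat /\ posdefmx (Xhat - xhat *m xhat^T) /\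
      alpha < frob B Xhat + 2 * (b^T *m xhat) 0 0 + d < beta).
Proof.
move=> HB Hab; split.
- case=> x /andP [h1 h2].
  set q := quadf B b d x.
  set r := Num.min (q - alpha) (beta - q).
  have r0 : 0 < r by rewrite lt_min !subr_gt0 h1 h2.
  have r1 : r <= q - alpha by rewrite ge_min lexx.
  have r2 : r <= beta - q by rewrite ge_min lexx orbT.
  set t := \tr B.
  set eps := r / 2 / (`|t| + 1).
  have a0 : 0 <= `|t| := normr_ge0 t.
  have ta : t <= `|t| := ler_norm t.
  have tb : - t <= `|t| by rewrite -normrN ler_norm.
  have e0 : 0 < eps by rewrite /eps divr_gt0 // ?divr_gt0 // ltr_pwDr.
  have eE : eps * (`|t| + 1) = r / 2.
    by rewrite /eps mulfVK // gt_eqF // ltr_pwDr.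
  exists x, (x *m x^T + eps%:M); split; last split.
  + by rewrite /symmx linearD /= trmx_mul trmxK tr_scalar_mx.
  + rewrite addrAC subrr add0r => v v0.
    rewrite mul_mx_scalar -scalemxAl mxE pmulr_rgt0 //.
    have Hn (i : 'I_n) : true -> 0 <= v^T 0 i * v i 0 by rewrite !mxE -expr2 sqr_ge0.
    rewrite mxE lt_def sumr_ge0 ?andbT //.
    apply/negP => /eqP/(psumr_eq0P Hn) H; move/negP: v0; apply; apply/eqP/matrixP => i j.
    rewrite ord1 !mxE; have := H i isT; rewrite !mxE -expr2.
    by move/eqP; rewrite sqrf_eq0 => /eqP.
  + rewrite frobD frob_rank1 frob_scalar -/t.
    have -> : bl B x x = q - 2 * (b^T *m x) 0 0 - d by rewrite /q /quadf /bl; ring.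
    have l1 : eps * t <= eps * `|t| by nra.
    have l2 : - (eps * `|t|) <= eps * t by nra.
    apply/andP; split; nra.
- case=> xh [X [HX [Hpd Hv]]].
  set P := X - xh *m xh^T.
  have XE : X = P + xh *m xh^T by rewrite /P subrK.
  have Psym : P^T = P.
    by rewrite /P linearD /= linearN /= trmx_mul trmxK HX.
  have Ppsd : psd P.
    move=> v; have [->|v0] := eqVneq v 0.
      by rewrite /bl linear0 /= mxE.
    exact: ltW (Hpd v v0).
  set s := frob B P.
  have val : frob B X + 2 * (b^T *m xh) 0 0 + d = quadf B b d xh + s.
    by rewrite XE frobD frob_rank1 /quadf /bl -/s; ring.
  rewrite val in Hv.
  have [s0|s0] := eqVneq s 0.
    by exists xh; rewrite s0 addr0 in Hv.
  have [y Hy] := exists_dir (B:=B) Psym Ppsd s0.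
  set a := bl B y y in Hy.
  set L := bl B xh y + bl B y xh + 2 * (b^T *m y) 0 0.
  have D0 : 0 <= L ^+ 2 + 4 * a * s by rewrite -mulrA addr_ge0 ?sqr_ge0 // mulr_ge0 // ltW.
  set r := Num.sqrt (L ^+ 2 + 4 * a * s).
  have Hr : r ^+ 2 = L ^+ 2 + 4 * a * s by rewrite sqr_sqrtr.
  have a0 : a != 0 by apply/eqP => a0; rewrite a0 mul0r ltxx in Hy.
  set t := (r - L) / (2 * a).
  exists (xh + t *: y).
  have -> : quadf B b d (xh + t *: y) = quadf B b d xh + (t * L + t ^+ 2 * a).
    have Eb : (b^T *m (xh + t *: y)) 0 0 = (b^T *m xh) 0 0 + t * (b^T *m y) 0 0.
      by rewrite mulmxDr -scalemxAr [in LHS]mxE [X in _ + X]mxE.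
    rewrite /quadf Eb -/(bl B (xh + t *: y) (xh + t *: y)) bl_exp.
    rewrite -/(bl B xh xh) /L /a; ring.
  suff -> : t * L + t ^+ 2 * a = s by [].
  have -> : s = (r ^+ 2 - L ^+ 2) / (4 * a) by rewrite Hr; field.
  by rewrite /t; field.
Qed.
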